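(* Let $\epsilon\in(0,1)$ and $q\in\mathbb N$. Let $\xi$ be a detailing of $\mu$ with respect to a finite set $A$, let $\eta$ be a distribution over $A\times B$ ($B$ finite) with $\eta|_1=\xi|_2$, let $H:[n]\to([0,1]^{A\times B})^2$ satisfy $(H(i))_1(a,b)=\Pr_{x\sim\xi|_1^{2:a}}[x_i=1]$ for all $i$ and all $(a,b)$ with $\eta(a,b)>0$, and let $\Xi$ be the output distribution of Change-types$(\xi,\eta,H)$. If $\xi$ is $(\epsilon,q)$-good, then the detailing $\Xi|_{2,3}$ of $\tau=\Xi|_2$ (with respect to $A\times B$) is also $(\epsilon,q)$-good.
   Context: Change-types$(\xi,\eta,H)$ outputs a sample $(x,y,(a,b))$ of a distribution $\Xi$ over $\{0,1\}^n\times\{0,1\}^n\times(A\times B)$: draw $(x,a)\sim\xi$ and then $b\sim\eta|_2^{1:a}$; then independently for each $i\in[n]$, with $h_1=(H(i))_1(a,b)$, $h_2=(H(i))_2(a,b)$: if $x_i=1$, set $y_i=0$ with probability $\max\{0,(h_1-h_2)/h_1\}$ and $y_i=1$ otherwise; if $x_i=0$, set $y_i=1$ with probability $\max\{0,(h_2-h_1)/(1-h_1)\}$ and $y_i=0$ otherwise (zero-denominator cases have probability zero). A detailing of $\mu$ w.r.t. a finite set $C$ is a distribution $\zeta$ on $\{0,1\}^n\times C$ with first marginal $\mu$; $\zeta|_1^{2:c}$ is the conditional first coordinate given second coordinate $c$. For a distribution $\nu$ over $\{0,1\}^n$, a $q$-tuple $(j_1,\dots,j_q)$ of distinct indices is $\epsilon$-independent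 w.r.t. $\nu$ if $d_{TV}(\nu|_{\{j_1,\dots,j_q\}},\prod_{\ell}\nu|_{j_\ell})\le\epsilon$; $\nu$ is $(\epsilon,q)$-good if at least a $1-\epsilon$ fraction of $q$-tuples of distinct indices are $\epsilon$-independent; the detailing $\zeta$ is $(\epsilon,q)$-good if there is $J\subseteq C$ with $\zeta|_2(J)\ge1-\epsilon$ and $\zeta|_1^{2:c}$ $(\epsilon,q)$-good for all $c\in J$. *)

(* Defs.v *)
From mathcomp Require Import all_boot all_order all_algebra.
From mathcomp Require Import reals.
Set Implicit Arguments. Unset Strict Implicit. Unset Printing Implicit Defensive.
Import Order.TTheory GRing.Theory Num.Theory.
Local Open Scope ring_scope.

Section Defs.
Variable R : realType.

Definition cube (n : nat) := {ffun 'I_n -> bool}.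

Definition is_dist (T : finType) (p : T -> R) : Prop :=
  (forall t, 0 <= p t) /\ \sum_t p t = 1.

Definition marg1 (T C : finType) (z : T * C -> R) (t : T) : R := \sum_(c : C) z (t, c).
Definition marg2 (T C : finType) (z : T * C -> R) (c : C) : R := \sum_(t : T) z (t, c).

(* zeta|_1^{2:c} : conditional law of the first coordinate given the second is c
   (only meaningful when marg2 z c > 0; set to 0 otherwise). *)
Definition cond1 (T C : finType) (z : T * C -> R) (c : C) (t : T) : R :=
  if marg2 z c == 0 then 0 else z (t, c) / marg2 z c.

Definition cond2 (T C : finType) (z : T * C -> R) (t : T) (c : C) : R :=
  if marg1 z t == 0 then 0 else z (t, c) / marg1 z t.

Definition marg_tuple (n q : nat) (nu : cube n -> R) (j : {ffun 'I_q -> 'I_n})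
  (z : cube q) : R :=
  \sum_(x : cube n | [forall l, x (j l) == z l]) nu x.

Definition marg_coord (n : nat) (nu : cube n -> R) (i : 'I_n) (b : bool) : R :=
  \sum_(x : cube n | x i == b) nu x.

Definition prod_marg (n q : nat) (nu : cube n -> R) (j : {ffun 'I_q -> 'I_n})
  (z : cube q) : R :=
  \prod_(l < q) marg_coord nu (j l) (z l).

Definition dTV (T : finType) (p p' : T -> R) : R :=
  (\sum_t `|p t - p' t|) / 2.

Definition eps_indep (n q : nat) (eps : R) (nu : cube n -> R)
  (j : {ffun 'I_q -> 'I_n}) : bool :=
  dTV (marg_tuple nu j) (prod_marg nu j) <= eps.

Definition good_dist (n q : nat) (eps : R) (nu : cube n -> R) : Prop :=
  (1 - eps) * (#|[set j : {ffun 'I_q -> 'I_n} | injectiveb j]|)%:R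
    <= (#|[set j : {ffun 'I_q -> 'I_n} | injectiveb j && eps_indep eps nu j]|)%:R.

Definition good_detailing (n q : nat) (C : finType) (eps : R)
  (zeta : cube n * C -> R) : Prop :=
  exists J : {set C},
    1 - eps <= \sum_(c in J) marg2 zeta c /\
    forall c, c \in J -> 0 < marg2 zeta c /\ good_dist q eps (cond1 zeta c).

(* Transition probability P[y_i = yb | x_i = xb] in Change-types, given h1, h2. *)
Definition trans (h1 h2 : R) (xb yb : bool) : R :=
  if xb then
    let p0 := if h1 == 0 then 0 else Num.max 0 ((h1 - h2) / h1) in
    if yb then 1 - p0 else p0
  else
    let p1 := if h1 == 1 then 0 else Num.max 0 ((h2 - h1) / (1 - h1)) in
    if yb then p1 else 1 - p1.

Definition change_types (n : nat) (A B : finType) (xi : cube n * A -> R)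
  (eta : A * B -> R) (H : 'I_n -> ((A * B -> R) * (A * B -> R)))
  (w : cube n * cube n * (A * B)) : R :=
  let: (x, y, (a, b)) := w in
  xi (x, a) * cond2 eta a b *
  \prod_(i < n) trans ((H i).1 (a, b)) ((H i).2 (a, b)) (x i) (y i).

Definition marg23 (n : nat) (C : finType) (Xi : cube n * cube n * C -> R)
  (w : cube n * C) : R :=
  \sum_(x : cube n) Xi (x, w.1, w.2).

End Defs.

(* Main.v *)
Require Import Defs.
From mathcomp Require Import all_boot all_order all_algebra.
From mathcomp Require Import reals.
From mathcomp Require Import ring lra.
Import Order.TTheory GRing.Theory Num.Theory.
Local Open Scope ring_scope.

Section Helpers.
Variable R : realType.

Lemma trans_ge0 (h1 h2 : R) xb yb : 0 <= h1 <= 1 -> 0 <= h2 <= 1 ->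
  0 <= trans h1 h2 xb yb.
Proof.
move=> /andP[h10 h11] /andP[h20 h21].
rewrite /trans; case: xb; case: yb.
- case: eqP => [_|/eqP h1n]; first by rewrite subr0.
  rewrite subr_ge0 ge_max ler01 /=.
  have h1p : 0 < h1 by rewrite lt_def h1n h10.
  by rewrite ler_pdivrMr // mul1r lerBlDr lerDl.
- by case: eqP => // _; rewrite le_max lexx.
- by case: eqP => // _; rewrite le_max lexx.
- case: eqP => [_|/eqP h1n]; first by rewrite subr0.
  rewrite subr_ge0 ge_max ler01 /=.
  have h1p : 0 < 1 - h1 by rewrite subr_gt0 lt_def eq_sym h1n h11.
  by rewrite ler_pdivrMr // mul1r lerB.
Qed.

Lemma trans_sum (h1 h2 : R) xb : \sum_yb trans h1 h2 xb yb = 1.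
Proof. by rewrite big_bool /trans; case: xb => /=; rewrite ?subrK ?addrNK // addrC subrK. Qed.

Lemma sum_fiber (T U : finType) (p : T -> U) (F : T -> U -> R) :
  \sum_t F t (p t) = \sum_u \sum_(t | p t == u) F t u.
Proof.
rewrite (partition_big p xpredT) //=; apply: eq_bigr => u _.
by apply: eq_big => // t /eqP ->.
Qed.

Lemma tv_contract (T U : finType) (P Q : T -> R) (L : T -> U -> R) :
  (forall t u, 0 <= L t u) -> (forall t, \sum_u L t u = 1) ->
  \sum_u `|\sum_t P t * L t u - \sum_t Q t * L t u| <= \sum_t `|P t - Q t|.
Proof.
move=> L0 L1.
apply: (@le_trans _ _ (\sum_u \sum_t `|P t - Q t| * L t u)).
  apply: ler_sum => u _; rewrite -sumrB.
  apply: (le_trans (ler_norm_sum _ _ _)); apply: ler_sum => t _.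
  by rewrite -mulrBl normrM (ger0_norm (L0 t u)).
rewrite exchange_big /=; apply: ler_sum => t _.
by rewrite -mulr_sumr L1 mulr1.
Qed.

Section Kernel.
Variable n : nat.
Variable k : 'I_n -> bool -> bool -> R.
Hypothesis k0 : forall i b b', 0 <= k i b b'.
Hypothesis k1 : forall i b, \sum_b' k i b b' = 1.

Definition Kx (x y : cube n) := \prod_i k i (x i) (y i).

Lemma Kx_ge0 x y : 0 <= Kx x y.
Proof. by apply: prodr_ge0 => i _. Qed.

Lemma Kx_sum x : \sum_y Kx x y = 1.
Proof.
rewrite /Kx /cube -(bigA_distr_bigA (fun i b => k i (x i) b)) /=.
by apply: big1 => i _.
Qed.

Lemma key (L : finType) (j : L -> 'I_n) (z : L -> bool) (x : cube n) :
  injective j ->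
  \sum_(y : cube n | [forall l, y (j l) == z l]) Kx x y
  = \prod_l k (j l) (x (j l)) (z l).
Proof.
move=> jinj.
rewrite big_mkcond /=.
transitivity (\sum_(y : cube n) \prod_i
   (k i (x i) (y i) * \prod_l ((j l == i) ==> (y i == z l))%:R)).
  apply: eq_bigr => y _; rewrite big_split /=.
  case: forallP => Hy.
    rewrite [X in _ * X]big1 ?mulr1 // => i _; apply: big1 => l _.
    by case: eqP => //= <-; rewrite Hy.
  have [l0 Hl0] : exists l0, y (j l0) != z l0.
    by apply/existsP; rewrite -negb_forall; apply/forallP.
  rewrite [X in _ * X](bigD1 (j l0)) //= (bigD1 l0) //= eqxx /= (negbTE Hl0).
  by rewrite !mul0r mulr0.
rewrite /cube -(bigA_distr_bigA (fun i b =>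
   k i (x i) b * \prod_l ((j l == i) ==> (b == z l))%:R)) /=.
transitivity (\prod_l \prod_i (if j l == i then k i (x i) (z l) else 1)); last first.
  apply: eq_bigr => l _; rewrite (bigD1 (j l)) //= eqxx big1 ?mulr1 // => i.
  by rewrite eq_sym => /negbTE ->.
rewrite exchange_big /=; apply: eq_bigr => i _.
case: (pickP (fun l => j l == i)) => [l0 /eqP Hl0|Hn].
  rewrite [RHS](bigD1 l0) //= Hl0 eqxx [X in _ * X]big1 ?mulr1; last first.
    move=> l Hl; case: (j l =P i) => // Hjl; case/negP: Hl; apply/eqP.
    by apply: jinj; rewrite Hjl Hl0.
  transitivity (\sum_b k i (x i) b * (b == z l0)%:R).
    apply: eq_bigr => b _; congr (_ * _).
    rewrite (bigD1 l0) //= Hl0 eqxx /= big1 ?mulr1 // => l Hl.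
    case: (j l =P i) => //= Hjl; case/negP: Hl; apply/eqP.
    by apply: jinj; rewrite Hjl Hl0.
  by rewrite big_bool; case: (z l0); rewrite /= ?mulr1 ?mulr0 ?addr0 ?add0r.
rewrite [RHS]big1; last by move=> l _; rewrite (Hn l).
rewrite -[RHS](k1 i (x i)); apply: eq_bigr => b _.
by rewrite big1 ?mulr1 // => l _; rewrite (Hn l).
Qed.


Definition Lk q (j : 'I_q -> 'I_n) (w z : cube q) := \prod_l k (j l) (w l) (z l).
Arguments Lk {q}.

Lemma Lk_ge0 q j w z : 0 <= @Lk q j w z.
Proof. by apply: prodr_ge0 => i _. Qed.

Lemma Lk_sum q j w : \sum_z @Lk q j w z = 1.
Proof.
rewrite /Lk /cube -(bigA_distr_bigA (fun l b => k (j l) (w l) b)) /=.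
by apply: big1 => i _.
Qed.

Variables (nu nu' : cube n -> R).
Hypothesis Hnu' : forall y, nu' y = \sum_x nu x * Kx x y.

Lemma mc_transfer i b :
  marg_coord nu' i b = \sum_b' marg_coord nu i b' * k i b' b.
Proof.
rewrite /marg_coord.
transitivity (\sum_x nu x * \sum_(y : cube n | y i == b) Kx x y).
  rewrite (eq_bigr _ (fun y _ => Hnu' y)) exchange_big /=.
  by apply: eq_bigr => x _; rewrite mulr_sumr.
transitivity (\sum_x nu x * k i (x i) b).
  apply: eq_bigr => x _; congr (_ * _).
  have := @key _ (fun _ : 'I_1 => i) (fun _ => b) x.
  rewrite big_ord1 => <-; last by move=> l l' _; rewrite !ord1.
  apply: eq_bigl => y; apply/idP/forallP => [Hy l|Hy]; [exact: Hy | exact: Hy ord0].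
rewrite (@sum_fiber _ _ (fun x : cube n => x i) (fun x b' => nu x * k i b' b)) /=.
by apply: eq_bigr => b' _; rewrite mulr_suml.
Qed.

Lemma mt_transfer q (j : {ffun 'I_q -> 'I_n}) (z : cube q) : injective j ->
  marg_tuple nu' j z = \sum_w marg_tuple nu j w * Lk j w z.
Proof.
move=> jinj; rewrite /marg_tuple.
transitivity (\sum_x nu x * \sum_(y : cube n | [forall l, y (j l) == z l]) Kx x y).
  rewrite (eq_bigr _ (fun y _ => Hnu' y)) exchange_big /=.
  by apply: eq_bigr => x _; rewrite mulr_sumr.
transitivity (\sum_x nu x * Lk j ([ffun l => x (j l)] : cube q) z).
  apply: eq_bigr => x _; rewrite (@key _ _ _ _ jinj) /Lk; congr (_ * _).
  by apply: eq_bigr => l _; rewrite ffunE.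
rewrite (@sum_fiber _ _ (fun x : cube n => ([ffun l => x (j l)] : cube q))
           (fun x w => nu x * Lk j w z)) /=.
apply: eq_bigr => w _; rewrite mulr_suml; apply: eq_bigl => x.
apply/eqP/forallP => [Hx l|Hx]; first by rewrite -Hx ffunE.
by apply/ffunP => l; rewrite ffunE; apply/eqP.
Qed.

Lemma pm_transfer q (j : {ffun 'I_q -> 'I_n}) (z : cube q) :
  prod_marg nu' j z = \sum_w prod_marg nu j w * Lk j w z.
Proof.
rewrite /prod_marg.
under eq_bigr do rewrite mc_transfer.
rewrite bigA_distr_bigA /=; apply: eq_bigr => w _.
by rewrite /Lk -big_split.
Qed.

Lemma indep_transfer q eps (j : {ffun 'I_q -> 'I_n}) : injectiveb j ->
  eps_indep eps nu j -> eps_indep eps nu' j.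
Proof.
move=> /injectiveP jinj; rewrite /eps_indep /dTV; apply: le_trans.
apply: ler_wpM2r; first by rewrite invr_ge0 ler0n.
under eq_bigr do rewrite mt_transfer // pm_transfer.
apply: tv_contract; [exact: Lk_ge0 | exact: Lk_sum].
Qed.

Lemma good_transfer q eps : good_dist q eps nu -> good_dist q eps nu'.
Proof.
rewrite /good_dist => Hg; apply: (le_trans Hg); rewrite ler_nat.
apply: subset_leq_card; apply/subsetP => j; rewrite !inE => /andP[ij e].
by rewrite ij (@indep_transfer _ _ _ ij e).
Qed.

End Kernel.
End Helpers.

Theorem lemma5p9 (R : realType) (eps : R) (q n : nat) (A B : finType)
  (mu : cube n -> R) (xi : cube n * A -> R) (eta : A * B -> R)
  (H : 'I_n -> ((A * B -> R) * (A * B -> R))) :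
  0 < eps < 1 ->
  is_dist mu ->
  is_dist xi -> marg1 xi = mu ->
  is_dist eta -> marg1 eta = marg2 xi ->
  (forall i ab, 0 <= (H i).1 ab <= 1 /\ 0 <= (H i).2 ab <= 1) ->
  (forall i a b, 0 < eta (a, b) ->
     (H i).1 (a, b) = \sum_(x : cube n | x i) cond1 xi a x) ->
  good_detailing q eps xi ->
  good_detailing q eps (marg23 (change_types xi eta H)).
Proof.
move=> _ _ [xi0 _] _ [eta0 _] Hm HH _ [J [HJ HJc]].
set Xi := marg23 (change_types xi eta H).
pose kk ab i b b' := trans ((H i).1 ab) ((H i).2 ab) b b'.
have kk0 ab i b b' : 0 <= kk ab i b b'.
  by case: (HH i ab) => h1 h2; apply: trans_ge0.
have kk1 ab i b : \sum_b' kk ab i b b' = 1 by apply: trans_sum.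
have XiE y a b : Xi (y, (a, b)) =
    \sum_x xi (x, a) * cond2 eta a b * @Kx _ _ (kk (a, b)) x y by [].
have c2ge0 a b : 0 <= cond2 eta a b.
  rewrite /cond2; case: ifP => // _; apply: divr_ge0 => //.
  by apply: sumr_ge0.
have m2E a b : marg2 Xi (a, b) = marg2 xi a * cond2 eta a b.
  rewrite /marg2; under eq_bigr do rewrite XiE.
  rewrite exchange_big mulr_suml; apply: eq_bigr => x _.
  by rewrite -mulr_sumr (@Kx_sum _ _ _ (kk1 (a, b))) mulr1.
have m2ge0 c : 0 <= marg2 Xi c.
  by case: c => a b; rewrite m2E mulr_ge0 // sumr_ge0.
exists [set c | (c.1 \in J) && (0 < marg2 Xi c)]; split.
  apply: (le_trans HJ).
  have -> : \sum_(c in [set c | (c.1 \in J) && (0 < marg2 Xi c)]) marg2 Xi c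
      = \sum_(a in J) \sum_b marg2 Xi (a, b).
    rewrite [RHS]pair_big_dep big_mkcond [RHS]big_mkcond.
    apply: eq_bigr => -[a b] _ /=; rewrite inE /= andbT.
    case: (a \in J) => //=; case: ifP => // hn.
    by have := m2ge0 (a, b); rewrite le_eqVlt hn orbF => /eqP.
  apply: ler_sum => a aJ.
  have [ma _] := HJc a aJ.
  under eq_bigr do rewrite m2E.
  rewrite -mulr_sumr.
  have e : \sum_b eta (a, b) = marg2 xi a.
    by have := congr1 (fun f => f a) Hm.
  rewrite /cond2 /marg1 e (gt_eqF ma) -mulr_suml e divff ?mulr1 //.
  by rewrite gt_eqF.
move=> -[a b]; rewrite inE /= => /andP[aJ pos]; split => //.
have [ma gd] := HJc a aJ.
apply: (@good_transfer _ _ _ (kk0 (a, b)) (kk1 (a, b)) (cond1 xi a) _ _ q eps gd) => y.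
rewrite /cond1 (gt_eqF pos) (gt_eqF ma) XiE m2E mulr_suml.
have cn : cond2 eta a b != 0.
  by apply/eqP => c0; move: pos; rewrite m2E c0 mulr0 ltxx.
apply: eq_bigr => x _.
by field; apply/andP; split => //; rewrite gt_eqF.
Qed.
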